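(* Let $M$ be a positive integer with $M\not\equiv0\bmod3$, $L$ a positive divisor of $M$ with $L^*>2$, and $\ell$ the number of prime factors of $L^*$. Then $J_0(L,M)=\frac16\Big(M\varphi(L^* )/L^*-\big(\tfrac{M}{3}\big)2^{\ell}\epsilon\Big)$, where $\big(\tfrac{M}{3}\big)$ is the Legendre symbol, and $\epsilon=1$ if $L^*$ has no prime factor congruent to $1\bmod3$, $\epsilon=0$ otherwise.
   Context: For a positive integer $n$, $n^*$ denotes the product of the distinct prime divisors of $n$, and $\varphi$ is Euler's totient function. For a positive integer $M$, a positive divisor $L$ of $M$ and an integer $k\ge0$, $J_k(L,M)=\sum_u u^k$, the sum over integers $u$ with $0<u<M/2$, $\gcd(u,L)=1$ and $u\equiv -M\bmod 3$. *)

(* Defs.v *)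
From HB Require Import structures.
From mathcomp Require Import all_boot all_order all_algebra.
Set Implicit Arguments. Unset Strict Implicit. Unset Printing Implicit Defensive.
Import Order.TTheory GRing.Theory Num.Theory.

Definition nstar (n : nat) : nat := \prod_(p <- primes n) p.

(* J_k(L,M) = sum of u^k over integers 0 < u < M/2 with gcd(u,L)=1 and
   u = -M mod 3.  (u < M/2 <-> 2u < M; u = -M mod 3 <-> 3 | u + M.) *)
Definition J (k L M : nat) : nat :=
  \sum_(1 <= u < M | [&& 2 * u < M, coprime u L & (u + M) %% 3 == 0]) u ^ k.

Definition legendre3 (M : nat) : int :=
  if M %% 3 == 1 then 1%R else if M %% 3 == 2 then (-1)%R else 0%R.

Definition eps3 (L : nat) : nat :=
  if has (fun p => p %% 3 == 1) (primes (nstar L)) then 0 else 1.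

(* Main.v *)
Require Import Defs.
From HB Require Import structures.
From mathcomp Require Import all_boot all_order all_algebra.
From mathcomp Require Import zify ring lra.
Import Order.TTheory GRing.Theory Num.Theory.

Definition h (n c : nat) : nat := \sum_(u <- iota 0 n | 3 %| u + c) 1.

Lemma h3 n c : h (n + 3) c = h n c + 1.
Proof.
rewrite /h iotaD big_cat /= add0n !big_cons big_nil /=.
congr (_ + _).
by repeat (case: ifP => ?); lia.
Qed.

Lemma hk k t c : h (3*k + t) c = k + h t c.
Proof.
elim: k => [|k IH]; first by rewrite muln0.
have -> : 3 * k.+1 + t = (3 * k + t) + 3 by lia.
by rewrite h3 IH; lia.
Qed.

Lemma hmod t c : h t c = h t (c %% 3).
Proof. by apply: eq_bigl => u; rewrite /dvdn modnDmr. Qed.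

Lemma uph6 k r : uphalf (6 * k + r) = 3 * k + uphalf r.
Proof.
elim: k => [|k IH] //.
have -> : 6 * k.+1 + r = (6 * k + r).+4.+2 by lia.
by rewrite /= -/(uphalf (6*k+r)) IH; lia.
Qed.

Definition cnt (s : seq nat) (M : nat) : nat :=
  \sum_(u <- iota 0 M | [&& 2 * u < M, all (fun p => ~~ (p %| u)) s & 3 %| u + M]) 1.

Lemma cnt_nil m : cnt [::] m = h (uphalf m) m.
Proof.
have Hu := uphalfK m; rewrite -mul2n in Hu.
have Hle : uphalf m <= m by case: (odd m) Hu => /= Hu; lia.
rewrite /cnt -(subnKC Hle) iotaD big_cat /= subnKC //.
rewrite [X in _ + X]big1_seq ?addn0; last first.
  move=> u /andP[/andP[H _] Hin]; move: Hin H.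
  rewrite mem_iota; case: (odd m) Hu => /= Hu; lia.
rewrite /h big_seq_cond [RHS]big_seq_cond; apply: eq_bigl => u.
rewrite mem_iota add0n leq0n /=; case: ltnP => H //=.
by rewrite (_ : (2 * u < m) = true) //; case: (odd m) Hu => /= Hu; lia.
Qed.

Lemma filter_iota_dvd p m : 0 < p ->
  filter (dvdn p) (iota 0 (p * m)) = map (muln p) (iota 0 m).
Proof.
move=> p0; elim: m => [|m IH]; first by rewrite muln0.
rewrite mulnS addnC iotaD filter_cat IH -addn1 iotaD map_cat add0n /=.
congr (_ ++ _).
case: p p0 {IH} => // p _.
rewrite /= dvdn_mulr // (eq_in_filter (a2 := pred0)) ?filter_pred0 // => x.
rewrite mem_iota /= => /andP[H1 H2]; apply/negP => /dvdnP [q Hq]; subst x.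
have [Hq|Hq] := leqP q m; nia.
Qed.

Lemma cnt_step p s m : prime p -> p \notin s -> all prime s -> ~~ (3 %| p * m) ->
  cnt s (p * m) = cnt (p :: s) (p * m) + cnt s m.
Proof.
move=> pp ps sp H3.
have p0 : 0 < p by apply: prime_gt0.
rewrite /cnt (bigID (dvdn p)) /= addnC; congr (_ + _).
  by apply: eq_bigl => u /=; case: (p %| u); rewrite /= ?andbF ?andbT.
rewrite (eq_bigl (fun u => (p %| u) && [&& 2 * u < p * m, all (fun p0 : nat => ~~ (p0 %| u)) s & 3 %| u + p * m])); last by move=> u; rewrite andbC.
rewrite -big_filter_cond filter_iota_dvd // big_map.
apply: eq_bigl => v.
rewrite mulnCA ltn_pmul2l // -mulnDr Gauss_dvdr; last first.
  rewrite prime_coprime //; apply: contra H3 => H; exact: dvdn_mulr.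
congr [&& _, _ & _].
apply: eq_in_all => q qs /=.
rewrite (Euclid_dvdM _ _ (allP sp q qs)) (dvdn_prime2 (allP sp q qs) pp).
by have -> : (q == p) = false by apply/eqP => E; move: ps; rewrite -E qs.
Qed.

Local Open Scope ring_scope.
Lemma base m : ~~ (3 %| m)%N ->
  ((6 * cnt [::] m)%N%:R : rat) = m%:R - (legendre3 m)%:~R - 3 * (~~ odd m)%:R.
Proof.
move=> H3; rewrite cnt_nil.
set k := (m %/ 6)%N; set r := (m %% 6)%N.
have Hm : m = (6 * k + r)%N by rewrite /k /r mulnC -divn_eq.
have Hr : (r < 6)%N by rewrite /r ltn_mod.
rewrite {1}Hm uph6 hk hmod /legendre3.
have Hodd : odd m = odd r by rewrite Hm oddD oddM.
rewrite Hodd Hm natrD natrM.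
clearbody k r.
have : (r = 1 \/ r = 2 \/ r = 4 \/ r = 5)%N by move: H3 Hm Hr; clear; lia.
have E : forall t, ((6 * k + t) %% 3 = t %% 3)%N by move=> t; rewrite -modnDml (_ : 6 * k = 3 * (2 * k))%N ?modnMr //; lia.
case=> [->|[->|[->|->]]]; rewrite E;
  rewrite /h /= !big_cons ?big_nil /=; lra.
Qed.

Fixpoint E (s : seq nat) (m : nat) : rat :=
  match s with [::] => (~~ odd m)%:R | p :: s' => E s' m - E s' (m %/ p) end.

Definition phiR (s : seq nat) : rat := \prod_(p <- s) (1 - (p%:R)^-1).
Definition legR (s : seq nat) : rat := \prod_(p <- s) (1 - (legendre3 p)%:~R).

Lemma legM a b : legendre3 (a * b) = legendre3 a * legendre3 b.
Proof.
rewrite /legendre3 -modnMm.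
move: (ltn_pmod a (isT : (0 < 3)%N)) (ltn_pmod b (isT : (0 < 3)%N)).
by case: (a %% 3)%N => [|[|[|]]]; case: (b %% 3)%N => [|[|[|]]].
Qed.

Lemma dvd_step p q m : prime p -> prime q -> q != p -> (p %| m)%N -> (q %| m)%N ->
  (q %| m %/ p)%N.
Proof.
move=> pp qp qnp pm qm; move: qm; rewrite -{1}(divnK pm) Euclid_dvdM // (dvdn_prime2 qp pp) (negbTE qnp) orbF; apply.
Qed.

Lemma main s : forall m, uniq s -> all prime s -> all (fun p => p %| m)%N s ->
  ~~ (3 %| m)%N -> (0 < m)%N ->
  6 * (cnt s m)%:R = m%:R * phiR s - (legendre3 m)%:~R * legR s - 3 * E s m.
Proof.
elim: s => [|p s IH] m us ps ds H3 m0.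
  by rewrite /phiR /legR !big_nil -natrM base //= mulr1 mulr1.
move: us ps ds => /= /andP[pns us] /andP[pp ps] /andP[pm ds].
set m' := (m %/ p)%N.
have Hm : m = (p * m')%N by rewrite /m' mulnC divnK.
have p0 : (0 < p)%N by apply: prime_gt0.
have m'0 : (0 < m')%N by move: m0; rewrite Hm muln_gt0 => /andP[].
have ds' : all (fun q => q %| m')%N s.
  apply/allP => q qs; apply: dvd_step => //; first exact: (allP ps).
    by apply/eqP => E; move: pns; rewrite -E qs.
  exact: (allP ds).
have H3' : ~~ (3 %| m')%N by apply: contra H3; rewrite Hm; apply: dvdn_mull.
have H3p : ~~ (3 %| p * m')%N by rewrite -Hm.
have Hc := cnt_step p s m' pp pns ps H3p.
rewrite -Hm in Hc.
have -> : ((cnt (p :: s) m)%:R : rat) = (cnt s m)%:R - (cnt s m')%:R.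
  by rewrite Hc natrD addrK.
rewrite mulrBr (IH m) // (IH m') // /phiR /legR !big_cons -/(phiR s) -/(legR s) /=.
clearbody m'; rewrite Hm legM natrM intrM.
have P0 : (p%:R : rat) != 0 by rewrite pnatr_eq0 -lt0n.
have Hl : ((legendre3 p)%:~R : rat) ^+ 2 = 1.
  have : ~~ (3 %| p)%N by apply: contra H3; rewrite Hm => H; apply: dvdn_mulr.
  rewrite /legendre3 /dvdn; move: (ltn_pmod p (isT : (0 < 3)%N)).
  by case: (p %% 3)%N => [|[|[|]]] //= _ _; rewrite ?expr1n // sqrrN expr1n.
apply/eqP; rewrite -subr_eq0.
set l := ((legendre3 p)%:~R : rat).
set a := ((legendre3 m')%:~R : rat).
rewrite (_ : _ - _ = (1 - l ^+ 2) * (a * legR s)); first by rewrite Hl subrr mul0r.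
field.
by [].
Qed.

Lemma odd_div p n : odd p -> (p %| n)%N -> odd (n %/ p) = odd n.
Proof. by move=> op pn; rewrite -{2}(divnK pn) oddM op andbT. Qed.

Lemma Eval s : forall m, uniq s -> all prime s -> all (fun p => p %| m)%N s -> (0 < m)%N ->
  E s m = if 2%N \in s then (s == [:: 2%N])%:R * ((~~ odd m)%:R - (~~ odd (m %/ 2)%N)%:R)
          else (s == [::])%:R * (~~ odd m)%:R.
Proof.
elim: s => [|p s IH] m us ps ds m0; first by rewrite /= mul1r.
move: us ps ds => /= /andP[pns us] /andP[pp ps] /andP[pm ds].
have p0 : (0 < p)%N by apply: prime_gt0.
have m'0 : (0 < m %/ p)%N by rewrite divn_gt0 // dvdn_leq.
have ds' : all (fun q => q %| m %/ p)%N s.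
  apply/allP => q qs; apply: dvd_step => //; first exact: (allP ps).
    by apply/eqP => E; move: pns; rewrite -E qs.
  exact: (allP ds).
rewrite (IH m) // (IH (m %/ p)%N) //.
have [E2|p2] := eqVneq p 2%N; first subst p.
  rewrite (negbTE pns) inE eqxx /= -mulrBr.
  by congr (_ * _); case: s {IH us ps ds ds' pns}.
have op : odd p by case: (boolP (odd p)) => // /(prime_oddPn pp) E; rewrite E eqxx in p2.
rewrite inE [(2 == p)%N]eq_sym (negbTE p2) /= (odd_div _ _ op pm).
case: ifP => s2.
  have m2 : (2 %| m)%N by apply: (allP ds).
  have pm2 : (p %| m %/ 2)%N by apply: dvd_step => //.
  rewrite (divnAC m p 2) (odd_div _ _ op pm2) eqseq_cons (negbTE p2) /=.
  by rewrite subrr mul0r.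
by rewrite subrr mul0r.
Qed.

Lemma dvd_prod_primes s q : all prime s -> prime q ->
  (q %| \prod_(p <- s) p)%N = (q \in s).
Proof.
move=> ps qp; elim: s ps => [|p s IH] /=; first by rewrite big_nil dvdn1; case: q qp => [|[]].
move=> /andP[pp ps]; rewrite big_cons Euclid_dvdM // dvdn_prime2 // IH // inE.
Qed.

Lemma prod_primes_gt0 s : all prime s -> (0 < \prod_(p <- s) p)%N.
Proof.
elim: s => [|p s IH] /=; first by rewrite big_nil.
by move=> /andP[pp ps]; rewrite big_cons muln_gt0 prime_gt0 // IH.
Qed.

Lemma primes_nstar L : (0 < L)%N -> primes (nstar L) = primes L.
Proof.
move=> L0; apply/eq_primes => q.
have ps : all prime (primes L) by apply/allP => x; rewrite mem_primes => /andP[].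
rewrite !mem_primes /nstar prod_primes_gt0 //= L0 /=.
by case: (boolP (prime q)) => //= qp; rewrite dvd_prod_primes // mem_primes qp L0.
Qed.

Lemma totient_prod s : uniq s -> all prime s ->
  totient (\prod_(p <- s) p) = (\prod_(p <- s) p.-1)%N.
Proof.
elim: s => [|p s IH] /=; first by rewrite !big_nil.
move=> /andP[pns us] /andP[pp ps]; rewrite !big_cons totient_coprime; last first.
  by rewrite prime_coprime // dvd_prod_primes.
by rewrite totient_prime // IH.
Qed.

Lemma phiR_eq s : all prime s ->
  phiR s = (\prod_(p <- s) p.-1)%N%:R / (\prod_(p <- s) p)%N%:R.
Proof.
elim: s => [|p s IH] /=; first by rewrite /phiR !big_nil divr1.
move=> /andP[pp ps]; rewrite /phiR !big_cons -/(phiR s) IH // !natrM.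
have p0 : (0 < p)%N by apply: prime_gt0.
have P0 : (p%:R : rat) != 0 by rewrite pnatr_eq0 -lt0n.
have Q0 : ((\prod_(p <- s) p)%N%:R : rat) != 0 by rewrite pnatr_eq0 -lt0n prod_primes_gt0.
rewrite -subn1 natrB //.
by field; apply/andP.
Qed.

Lemma legR_eq s : all (fun p => p %% 3 != 0)%N s ->
  legR s = (2 ^ size s)%N%:R * (if has (fun p => p %% 3 == 1)%N s then 0%N else 1%N)%:R.
Proof.
elim: s => [|p s IH] /=; first by rewrite /legR big_nil mulr1.
move=> /andP[p3 ps]; rewrite /legR big_cons -/(legR s) IH // /legendre3.
move: p3 (ltn_pmod p (isT : (0 < 3)%N)).
case: (p %% 3)%N => [|[|[|]]] //= _ _.
  by rewrite (_ : (1%:~R : rat) = 1) // subrr mul0r mulr0.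
rewrite (_ : ((-1)%:~R : rat) = -1) // opprK expnS natrM.
by rewrite mulrA.
Qed.

Lemma J_cnt L M : (0 < L)%N -> (0 < M)%N -> ~~ (3 %| M)%N -> J 0 L M = cnt (primes L) M.
Proof.
move=> L0 M0 H3; rewrite /J /cnt.
case: M M0 H3 => // M' _ H3.
rewrite /index_iota subSS subn0 /= big_cons /= add0n.
rewrite (negbTE H3) andbF big_seq_cond [RHS]big_seq_cond.
apply: eq_big => [u|u /andP[]]; last by rewrite expn0.
case: (boolP (u \in iota 1 M')) => //= uin.
have u0 : (0 < u)%N by move: uin; rewrite mem_iota => /andP[].
congr [&& _, _ & _].
rewrite coprime_has_primes // -all_predC; apply: eq_in_all => p pin /=.
by rewrite mem_primes u0 /=; move: pin; rewrite mem_primes => /andP[-> _].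
Qed.

Theorem propositionA4 (M L : nat) :
  (0 < M)%N -> ~~ (3 %| M)%N -> (0 < L)%N -> (L %| M)%N -> (2 < nstar L)%N ->
  ((J 0 L M)%:R : rat) =
    (1 / 6) * ((M * totient (nstar L))%:R / (nstar L)%:R
               - (legendre3 M)%:~R * (2 ^ size (primes (nstar L)))%:R * (eps3 L)%:R).
Proof.
move=> M0 H3 L0 LM N2.
have us : uniq (primes L) by apply: primes_uniq.
have ps : all prime (primes L) by apply/allP => x; rewrite mem_primes => /andP[].
have ds : all (fun p => p %| M)%N (primes L).
  apply/allP => x; rewrite mem_primes => /and3P[_ _ xL]; exact: dvdn_trans xL LM.
have p3 : all (fun p => p %% 3 != 0)%N (primes L).
  apply/allP => p pin; apply: contra H3 => H; exact: dvdn_trans H (allP ds p pin).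
have Hm := main (primes L) M us ps ds H3 M0.
have HE : E (primes L) M = 0.
  rewrite Eval //.
  case: ifP => _.
    case: eqP => [E2|_]; last by rewrite mul0r.
    by move: N2; rewrite /nstar E2 big_cons big_nil.
  case: eqP => [E2|_]; last by rewrite mul0r.
  by move: N2; rewrite /nstar E2 big_nil.
rewrite /eps3 primes_nstar // J_cnt //.
rewrite {1 2}/nstar totient_prod // natrM.
rewrite HE mulr0 subr0 phiR_eq // legR_eq // in Hm.
rewrite (_ : (cnt (primes L) M)%:R = 1 / 6 * (6 * (cnt (primes L) M)%:R)); last by field.
rewrite Hm; congr (_ * (_ - _)); rewrite ?mulrA //.
Qed.
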